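(* Let $n\le m$, $w\in\mathcal W_m$ and $w^c=c_m(w)\in\mathcal W^c_m$, with $w$ on $[0,K_m)$ and $w^c$ on $[0,q_m)$. Let $S^*$ be a set of $(n,m)$-genetic markers, $g=\prod_{i=n}^{m-1}k_i$ the total number of $(n,m)$-genetic markers and $d=|S^*|/g$. Let $A\subseteq[0,K_m)$ be the set of locations at which an $n$-subword of $w$ with genetic marker in $S^*$ begins, and $A^c\subseteq[0,q_m)$ the set of locations at which an $n$-subword of $w^c$ with genetic marker in $S^*$ begins. Then $$\frac{|A|}{K_m}=\frac{d}{K_n},\qquad \frac{|A^c|}{q_m}=\frac{d}{q_n}\prod_{p=n}^{m-1}\Big(1-\frac1{l_p}\Big),$$ and consequently $\frac{|A^c|}{q_m}=\frac{|A|}{K_m}\prod_{p=n}^{m-1}(1-\frac1{l_p})\frac{K_n}{q_n}$.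
   Context: Fix a circular coefficient sequence $\langle k_n,l_n\rangle$, $K_n=\prod_{i<n}k_i$, $q_0=1,p_0=0$, $q_{n+1}=k_nl_nq_n^2$, $p_{n+1}=p_nq_nk_nl_n+1$; $\mathcal C_n(w_0,\dots,w_{k_n-1})=\prod_{i=0}^{q_n-1}\prod_{j=0}^{k_n-1}(b^{q_n-j_i}w_j^{l_n-1}e^{j_i})$ with $j_i\in[0,q_n)$, $j_i\equiv p_n^{-1}i\pmod{q_n}$. $\langle\mathcal W_n\rangle$ is an odometer-based construction sequence ($\mathcal W_0=\Sigma$, $\mathcal W_{n+1}\subseteq(\mathcal W_n)^{k_n}$, uniquely readable); $c_0=\mathrm{id}$, $c_{n+1}(w_0\cdots w_{k_n-1})=\mathcal C_n(c_n(w_0),\dots,c_n(w_{k_n-1}))$, $\mathcal W_n^c=c_n[\mathcal W_n]$. Genetic markers: in an odometer word $w_0w_1\cdots w_{k_t-1}\in\mathcal W_{t+1}$ the $t$-subword $w_j$ has marker $j$; in a circular word $\mathcal C_t(w_0,\dots,w_{k_t-1})$ each displayed copy of $w_j$ in the power $w_j^{l_t-1}$ is a $t$-subword with marker $j$. An $n$-subword occurrence in an $m$-word lies in a unique chain $u_n\subset u_{n+1}\subset\dots\subset u_m$ with $u_i$ a subword of $u_{i+1}$ of marker $j_i$; its $(n,m)$-genetic marker is $\langle j_n,\dots,j_{m-1}\rangle$, $0\le j_i<k_i$. *)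

(* Defs.v *)
From HB Require Import structures.
From mathcomp Require Import all_boot all_order all_algebra.
Set Implicit Arguments. Unset Strict Implicit. Unset Printing Implicit Defensive.
Import Order.TTheory GRing.Theory Num.Theory.

Definition K (k : nat -> nat) (n : nat) : nat := \prod_(i < n) k i.

Fixpoint qp (k l : nat -> nat) (n : nat) : nat * nat :=
  match n with
  | 0 => (1, 0)
  | n'.+1 => let (q, p) := qp k l n' in
             (k n' * l n' * q ^ 2, p * q * k n' * l n' + 1)
  end.
Definition qq k l n := (qp k l n).1.
Definition pp k l n := (qp k l n).2.

Definition pinv k l n : nat :=
  nth 0 [seq x <- iota 0 (qq k l n) | (pp k l n * x) %% qq k l n == 1 %% qq k l n] 0.
Definition jidx k l n i : nat := (pinv k l n * i) %% qq k l n.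

Definition circular_coeff (k l : nat -> nat) : Prop :=
  (forall n, 2 <= k n) /\ (forall n, 0 < l n) /\ (forall n, l n < l n.+1) /\
  exists B : rat, forall N, (\sum_(i < N) ((l i)%:R)^-1 <= B)%R.

(* Level-m words, represented with their hierarchical structure:
   a level-(m+1) word is a sequence of level-m words. *)
Fixpoint lword (S : Type) (m : nat) : Type :=
  match m with 0 => S | m'.+1 => seq (lword S m') end.

Fixpoint flat (S : Type) (m : nat) : lword S m -> seq S :=
  match m return lword S m -> seq S with
  | 0 => fun a => [:: a]
  | m'.+1 => fun ws => flatten (map (@flat S m') ws)
  end.

(* Odometer-based construction sequence:
   W_0 = Sigma, W_{n+1} subset (W_n)^{k_n}, uniquely readable. *)
Definition odometer_construction (S : Type) (k : nat -> nat)
    (W : forall m, lword S m -> bool) : Prop :=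
  (forall a : S, W 0 a) /\
  (forall m (ws : lword S m.+1), W m.+1 ws -> size ws = k m /\ all (W m) ws) /\
  (forall m (u v w : lword S m) (p s : seq S), W m u -> W m v -> W m w ->
     flat u ++ flat v = p ++ flat w ++ s -> p = [::] \/ s = [::]).

Inductive csym (S : Type) := CL of S | Cb | Ce.
Arguments Cb {S}. Arguments Ce {S}.

Definition cblock (S : Type) k l n i (v : seq (csym S)) : seq (csym S) :=
  nseq (qq k l n - jidx k l n i) Cb ++ flatten (nseq (l n - 1) v)
    ++ nseq (jidx k l n i) Ce.

Definition Cop (S : Type) k l n (vs : seq (seq (csym S))) : seq (csym S) :=
  flatten [seq flatten [seq cblock k l n i (nth [::] vs j) | j <- iota 0 (k n)]
          | i <- iota 0 (qq k l n)].

Fixpoint cmap (S : Type) k l (m : nat) : lword S m -> seq (csym S) :=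
  match m return lword S m -> seq (csym S) with
  | 0 => fun a => [:: CL a]
  | m'.+1 => fun ws => Cop k l m' (map (@cmap S k l m') ws)
  end.

(* (start location, (n,m)-genetic marker <j_n,...,j_{m-1}>) of all
   n-subword occurrences in the odometer word flat w, w of level m. *)
Fixpoint occ (S : Type) (n m : nat) : lword S m -> seq (nat * seq nat) :=
  match m return lword S m -> seq (nat * seq nat) with
  | 0 => fun _ => if n == 0 then [:: (0, [::])] else [::]
  | m'.+1 => fun ws =>
      if n == m'.+1 then [:: (0, [::])] else
      flatten (map (fun ju : nat * lword S m' =>
         map (fun x : nat * seq nat =>
                (size (flatten (map (@flat S m') (take ju.1 ws))) + x.1,
                 rcons x.2 ju.1))
             (occ n ju.2))
        (zip (iota 0 (size ws)) ws))
  end.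

(* same for the circular word cmap w: the r-th displayed copy (r < l_{m-1}-1)
   of c_{m-1}(w_j) in the (i,j)-block is an (m-1)-subword with marker j. *)
Fixpoint cocc (S : Type) k l (n m : nat) : lword S m -> seq (nat * seq nat) :=
  match m return lword S m -> seq (nat * seq nat) with
  | 0 => fun _ => if n == 0 then [:: (0, [::])] else [::]
  | m'.+1 => fun ws =>
      if n == m'.+1 then [:: (0, [::])] else
      let vs := map (@cmap S k l m') ws in
      let blocks i := [seq cblock k l m' i (nth [::] vs j) | j <- iota 0 (k m')] in
      let bstart i j := size (flatten [seq flatten (blocks i') | i' <- iota 0 i])
                        + size (flatten (take j (blocks i))) in
      flatten [seq
        flatten (map (fun ju : nat * lword S m' =>
          flatten [seq
            map (fun x : nat * seq nat =>
                   (bstart i ju.1 + (qq k l m' - jidx k l m' i)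
                      + r * size (cmap k l ju.2) + x.1,
                    rcons x.2 ju.1))
                (cocc k l n ju.2)
          | r <- iota 0 (l m' - 1)])
          (zip (iota 0 (size ws)) ws))
      | i <- iota 0 (qq k l m')]
  end.

Definition genetic_marker (k : nat -> nat) (n m : nat) (mu : seq nat) : bool :=
  (size mu == m - n) && all (fun i => nth 0 mu i < k (n + i)) (iota 0 (m - n)).

(* Main.v *)
Require Import Defs.
From HB Require Import structures.
From mathcomp Require Import all_boot all_order all_algebra.
From mathcomp Require Import zify.
From mathcomp.algebra_tactics Require Import ring.
Import Order.TTheory GRing.Theory Num.Theory.

Lemma uniq_flatten_lab (I I' T : eqType) (s : seq I) (F : I -> seq T)
  (key : I -> I') (lab : T -> I') :
  uniq (map key s) -> (forall a, a \in s -> uniq (F a)) ->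
  (forall a x, a \in s -> x \in F a -> lab x = key a) ->
  uniq (flatten (map F s)).
Proof.
elim: s => //= a s IH /andP[ka us] hu hl.
rewrite cat_uniq hu ?mem_head //= IH ?andbT //; last first.
- by move=> b x bs xb; apply: hl => //; rewrite in_cons bs orbT.
- by move=> b bs; apply: hu; rewrite in_cons bs orbT.
apply/hasPn => x /flatten_mapP[b bs xb]; apply/negP => xa.
have e1 := hl a x (mem_head _ _) xa.
have e2 : lab x = key b by apply: hl => //; rewrite in_cons bs orbT.
by move: ka; rewrite -e1 e2 (map_f key bs).
Qed.

Lemma count_mem_uniq (T U : eqType) (f : T -> U) (S : seq U) (L : seq T) c :
  uniq S -> (forall s, s \in S -> count (fun x => f x == s) L = c) ->
  count (fun x => f x \in S) L = size S * c.
Proof.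
elim: S => [|s S IH] /=; first by rewrite (eq_count (a2 := pred0)) ?count_pred0.
move=> /andP[sS uS] h.
have -> : count (fun x => f x \in s :: S) L =
   count (predU (fun x => f x == s) (fun x => f x \in S)) L.
  by apply: eq_count => x /=; rewrite in_cons.
have := count_predUI (fun x => f x == s) (fun x => f x \in S) L.
rewrite (@eq_count _ (predI _ _) pred0) ?count_pred0 ?addn0; last first.
  by move=> x /=; case: eqP => // ->; rewrite (negbTE sS).
move=> ->; rewrite h ?mem_head // IH ?mulSn // => t tS.
by apply: h; rewrite in_cons tS orbT.
Qed.

Lemma sumn_count_mul (T : Type) (P : pred T) (s : seq T) c :
  sumn [seq P a * c | a <- s] = count P s * c.
Proof. by elim: s => //= a s ->; rewrite mulnDl. Qed.

Lemma zip_mem1 (S T : eqType) (s : seq S) (t : seq T) x :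
  size s <= size t -> x \in zip s t -> x.1 \in s.
Proof. by move=> h xz; rewrite -(unzip1_zip h); apply: map_f. Qed.

Lemma zip_mem2 (S T : eqType) (s : seq S) (t : seq T) x :
  size t <= size s -> x \in zip s t -> x.2 \in t.
Proof. by move=> h xz; rewrite -(unzip2_zip h); apply: map_f. Qed.

Lemma divn_lab d a y : y < d -> (a * d + y) %/ d = a.
Proof. by move=> h; rewrite divnMDl ?divn_small ?addn0 //; apply: leq_ltn_trans h. Qed.

Lemma count_zip_fst (T : Type) (t : seq T) N j :
  size t = N -> j < N -> count (fun ju : nat * T => ju.1 == j) (zip (iota 0 N) t) = 1.
Proof.
move=> hs hj.
have -> : count (fun ju : nat * T => ju.1 == j) (zip (iota 0 N) t)
  = count (pred1 j) (unzip1 (zip (iota 0 N) t)) by rewrite count_map.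
rewrite unzip1_zip ?size_iota ?hs // count_uniq_mem ?iota_uniq //.
by rewrite mem_iota /= hj.
Qed.


Lemma sumn_const (T : Type) (f : T -> nat) (s : seq T) c :
  all (fun x => f x == c) s -> sumn (map f s) = size s * c.
Proof. by elim: s => //= a s IH /andP[/eqP -> /IH ->]; rewrite mulSn. Qed.

Lemma size_flatten_const (T : Type) U (F : T -> seq U) (s : seq T) c :
  all (fun x => size (F x) == c) s -> size (flatten (map F s)) = size s * c.
Proof. by move=> h; rewrite size_flatten /shape -map_comp; apply: sumn_const. Qed.

Lemma map_zip_nth (T U : Type) (F : nat * T -> U) (s : seq T) d :
  map F (zip (iota 0 (size s)) s) = map (fun j => F (j, nth d s j)) (iota 0 (size s)).
Proof.
have -> : zip (iota 0 (size s)) s = map (fun j => (j, nth d s j)) (iota 0 (size s)).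
  apply: (@eq_from_nth _ (0, d)); first by rewrite size_zip size_map size_iota minnn.
  move=> i; rewrite size_zip size_iota minnn => hi.
  by rewrite nth_zip ?size_iota // (nth_map 0) ?size_iota // nth_iota.
by rewrite -map_comp.
Qed.

Lemma count_iota_eq N j : j < N -> count (fun i => i == j) (iota 0 N) = 1.
Proof.
move=> hj; have := count_uniq_mem j (iota_uniq 0 N); rewrite mem_iota /= hj /=.
by move=> <-; apply: eq_count => x /=; rewrite eq_sym.
Qed.

Lemma KS k m : K k m.+1 = K k m * k m.
Proof. by rewrite /K big_ord_recr. Qed.

Lemma K_gt0 k m : (forall i, 0 < k i) -> 0 < K k m.
Proof. by move=> h; rewrite /K prodn_gt0. Qed.

Lemma marker_rcons k n m mu j :
  n <= m -> genetic_marker k n m.+1 (rcons mu j) -> genetic_marker k n m mu /\ j < k m.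
Proof.
rewrite /genetic_marker size_rcons => nm /andP[/eqP hs /allP ha].
have sm : size mu = m - n by lia.
split.
  rewrite sm eqxx /=; apply/allP => i; rewrite mem_iota /= => hi.
  have := ha i; rewrite mem_iota nth_rcons sm hi /=; apply; lia.
have := ha (m - n); rewrite mem_iota nth_rcons sm ltnn eqxx.
have -> : n + (m - n) = m by lia.
apply; lia.
Qed.

Lemma marker_nil k n m mu : n = m -> genetic_marker k n m mu -> mu = [::].
Proof. by move=> -> /andP[]; rewrite subnn size_eq0 => /eqP. Qed.

Lemma marker_split k n m mu : n <= m -> genetic_marker k n m.+1 mu ->
  exists mu' j, mu = rcons mu' j.
Proof.
move=> nm /andP[/eqP hs _]; case/lastP: mu hs => [|mu' j]; first by rewrite /=; lia.
by exists mu', j.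
Qed.

Lemma all_take (T : Type) (P : pred T) (s : seq T) j : all P s -> all P (take j s).
Proof. by rewrite -{1}(cat_take_drop j s) all_cat => /andP[]. Qed.

Lemma size_pref_flat S m (ws : seq (lword S m)) j c :
  all (fun u => size (@flat S m u) == c) ws -> j <= size ws ->
  size (flatten (map (@flat S m) (take j ws))) = j * c.
Proof.
move=> h hj; rewrite (@size_flatten_const _ _ _ _ (c)) ?size_take_min; first by congr (_ * _); lia.
by apply: all_take.
Qed.

Lemma flat_size S k (W : forall m, lword S m -> bool) :
  (forall m (ws : lword S m.+1), W m.+1 ws -> size ws = k m /\ all (W m) ws) ->
  forall m (w : lword S m), W m w -> size (flat w) = K k m.
Proof.
move=> hW; elim=> [|m IH] w hw; first by rewrite /K big_ord0.
have [hs ha] := hW m w hw.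
rewrite /= (@size_flatten_const _ _ _ _ (K k m)); first by rewrite hs KS mulnC.
by apply: sub_all ha => u /IH ->.
Qed.


Lemma qqS k l m : qq k l m.+1 = k m * l m * qq k l m ^ 2.
Proof. by rewrite /qq /=; case: (qp k l m). Qed.

Lemma qq_gt0 k l m : (forall i, 0 < k i) -> (forall i, 0 < l i) -> 0 < qq k l m.
Proof.
move=> hk hl; elim: m => [|m IH]; first by [].
by rewrite qqS !muln_gt0 hk hl IH.
Qed.

Lemma jidx_lt k l m i : 0 < qq k l m -> jidx k l m i < qq k l m.
Proof. by move=> h; rewrite /jidx ltn_pmod. Qed.

Lemma size_flatten_nseq T c (v : seq T) : size (flatten (nseq c v)) = c * size v.
Proof. by elim: c => // c IH; rewrite /= size_cat IH mulSn. Qed.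

Lemma cblock_size S k l m i (v : seq (csym S)) :
  0 < l m -> 0 < qq k l m -> size v = qq k l m ->
  size (cblock k l m i v) = l m * qq k l m.
Proof.
move=> hl hq hv; rewrite /cblock !size_cat !size_nseq size_flatten_nseq hv.
have hj := @jidx_lt k l m i hq.
have -> : l m * qq k l m = qq k l m + (l m - 1) * qq k l m.
  by rewrite -mulSn subn1 prednK.
lia.
Qed.

Lemma cblocks_size S k l m (vs : seq (seq (csym S))) i j :
  0 < l m -> 0 < qq k l m -> size vs = k m ->
  all (fun v => size v == qq k l m) vs -> j < k m ->
  size (cblock k l m i (nth [::] vs j)) = l m * qq k l m.
Proof.
move=> hl hq hs ha hj; apply: cblock_size => //.
by apply/eqP; move/all_nthP: ha; apply; rewrite hs.
Qed.

Lemma size_flat_blocks S k l m (vs : seq (seq (csym S))) i j :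
  0 < l m -> 0 < qq k l m -> size vs = k m ->
  all (fun v => size v == qq k l m) vs -> j <= k m ->
  size (flatten (take j [seq cblock k l m i (nth [::] vs j') | j' <- iota 0 (k m)]))
   = j * (l m * qq k l m).
Proof.
move=> hl hq hs ha hj; rewrite -map_take (@size_flatten_const _ _ _ _ (l m * qq k l m)).
  by rewrite size_takel ?size_iota.
apply/allP => j' /mem_take; rewrite mem_iota /= => hj'.
by rewrite (@cblocks_size S k l m vs i j' hl hq hs ha hj').
Qed.

Lemma cmap_size S k l (W : forall m, lword S m -> bool) :
  (forall i, 0 < k i) -> (forall i, 0 < l i) ->
  (forall m (ws : lword S m.+1), W m.+1 ws -> size ws = k m /\ all (W m) ws) ->
  forall m (w : lword S m), W m w -> size (cmap k l w) = qq k l m.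
Proof.
move=> hk hl hW; elim=> [|m IH] w hw; first by [].
have [hs ha] := hW m w hw.
have hq := @qq_gt0 k l m hk hl.
have hvs : all (fun v => size v == qq k l m) (map (@cmap S k l m) w).
  by rewrite all_map; apply: sub_all ha => u /IH /= ->.
have hsv : size (map (@cmap S k l m) w) = k m by rewrite size_map.
rewrite /= /Cop (@size_flatten_const _ _ _ _ (k m * (l m * qq k l m))).
  by rewrite size_iota qqS; nia.
apply/allP => i _ /=; apply/eqP.
rewrite -(@size_flat_blocks S k l m _ i (k m) (hl m) hq hsv hvs (leqnn _)).
by rewrite take_oversize // size_map size_iota.
Qed.


Definition cpos k l m (i j r y : nat) :=
  i * (k m * (l m * qq k l m)) + j * (l m * qq k l m) + (qq k l m - jidx k l m i)
  + r * qq k l m + y.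

Lemma cocc_eq S k l (W : forall m, lword S m -> bool) n m (w : lword S m.+1) d :
  (forall i, 0 < k i) -> (forall i, 0 < l i) ->
  (forall m (ws : lword S m.+1), W m.+1 ws -> size ws = k m /\ all (W m) ws) ->
  n != m.+1 -> W m.+1 w ->
  cocc k l n w = flatten [seq flatten [seq flatten [seq
     map (fun x : nat * seq nat => (cpos k l m i j r x.1, rcons x.2 j))
         (cocc k l n (nth d w j))
     | r <- iota 0 (l m - 1)] | j <- iota 0 (k m)] | i <- iota 0 (qq k l m)].
Proof.
move=> hk hl hW ne hw.
have [hs ha] := hW m w hw.
have hq := @qq_gt0 k l m hk hl.
have hcs := @cmap_size S k l W hk hl hW.
have hvs : all (fun v => size v == qq k l m) (map (@cmap S k l m) w).
  by rewrite all_map; apply: sub_all ha => u /hcs /= ->.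
have hsv : size (map (@cmap S k l m) w) = k m by rewrite size_map.
rewrite /= (negbTE ne); congr flatten; apply: eq_map => i.
rewrite (@map_zip_nth _ _ _ _ d) hs; congr flatten; apply/eq_in_map => j.
rewrite mem_iota /= => hj; congr flatten; apply: eq_map => r /=.
apply: eq_map => x /=; congr pair.
rewrite hcs; last by move/all_nthP: ha; apply; rewrite hs.
rewrite (@size_flat_blocks S k l m _ i j (hl m) hq hsv hvs (ltnW hj)).
rewrite (@size_flatten_const _ _ _ _ (k m * (l m * qq k l m))) ?size_iota //.
apply/allP => i' _ /=; apply/eqP.
rewrite -(@size_flat_blocks S k l m _ i' (k m) (hl m) hq hsv hvs (leqnn _)).
by rewrite take_oversize // size_map size_iota.
Qed.


Lemma occ_props S k (W : forall m, lword S m -> bool) n :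
  (forall i, 0 < k i) ->
  (forall m (ws : lword S m.+1), W m.+1 ws -> size ws = k m /\ all (W m) ws) ->
  forall m (w : lword S m), n <= m -> W m w ->
  [/\ forall x, x \in occ n w -> x.1 < K k m,
      uniq (map fst (occ n w)) &
      forall mu, genetic_marker k n m mu -> count (fun x => x.2 == mu) (occ n w) = 1].
Proof.
move=> hk hW; elim=> [|m IH] w nm hw.
  have n0 : n = 0 by lia.
  rewrite /= n0 /=; split => //.
    by move=> x; rewrite inE => /eqP ->; apply: K_gt0.
  by move=> mu hm; rewrite (@marker_nil k 0 0 mu erefl hm).
case: (eqVneq n m.+1) => [e|ne].
  rewrite /= e eqxx; split => //.
    by move=> x; rewrite inE => /eqP ->; apply: K_gt0.
  by move=> mu hm; rewrite (@marker_nil k _ _ mu erefl hm).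
have nm' : n <= m by lia.
have [hs ha] := hW m w hw.
have d : lword S m.
  simpl in w; destruct w as [|d0 w']; last exact d0.
  by exfalso; have := hk m; rewrite -hs.
have hsz := @flat_size S k W hW.
have hpre : forall j, j <= size w ->
    size (flatten (map (@flat S m) (take j w))) = j * K k m.
  by move=> j hj; apply: (@size_pref_flat S m w j (K k m)) => //; apply: sub_all ha => u /hsz ->.
have hWj : forall j, j < size w -> W m (nth d w j) by apply/all_nthP.
rewrite /= (negbTE ne) (@map_zip_nth _ _ _ _ d) /=; split.
- move=> x /flatten_mapP[j hj /mapP[y hy ->]] /=.
  move: hj; rewrite mem_iota /= => hj.
  have [IH1 _ _] := IH _ nm' (hWj j hj).
  have := IH1 y hy; rewrite hpre ?KS; last by rewrite ltnW.
  move: hj; rewrite hs => hj hy1; 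
  apply: (@leq_trans (j.+1 * K k m)); first by rewrite mulSn addnC ltn_add2r.
  by rewrite mulnC leq_mul2l hj orbT.
- rewrite map_flatten -map_comp.
  apply: (@uniq_flatten_lab _ _ _ _ _ id (fun x => x %/ K k m)).
  + by rewrite map_id iota_uniq.
  + move=> j; rewrite mem_iota /= => hj; rewrite -map_comp.
    have [_ IH2 _] := IH _ nm' (hWj j hj).
    rewrite (eq_map (g := addn (size (flatten (map (@flat S m) (take j w)))) \o fst)) //.
    by rewrite map_comp map_inj_uniq //; apply: addnI.
  + move=> j x; rewrite mem_iota /= => hj /mapP[z /mapP[y hy ->] ->] /=.
    have [IH1 _ _] := IH _ nm' (hWj j hj).
    by rewrite hpre ?(ltnW hj) // divn_lab // IH1.
- move=> mu hmu; have [mu' [jm emu]] := @marker_split k n m mu nm' hmu.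
  move: hmu; rewrite emu => /(@marker_rcons k n m mu' jm nm')[hmu' hjm].
  rewrite count_flatten -map_comp.
  rewrite ((eq_in_map _ (fun j => (j == jm) * 1) _).1).
    by rewrite sumn_count_mul count_iota_eq // hs.
  move=> j; rewrite mem_iota /= => hj /=; rewrite count_map.
  have [_ _ IH3] := IH _ nm' (hWj j hj).
  rewrite (eq_count (a2 := fun x => (x.2 == mu') && (j == jm))); last first.
    by move=> x /=; rewrite eqseq_rcons.
  case: eqP => _; last by rewrite muln1 (eq_count (a2 := pred0)) ?count_pred0 // => x; rewrite andbF.
  by rewrite (eq_count (a2 := fun x => x.2 == mu')) ?IH3 // => x; rewrite andbT.
Qed.


Lemma arith1 Q l r y ji : r < l - 1 -> y < Q -> (Q - ji) + r*Q + y < l*Q.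
Proof. move=> hr hy. have h : r.+2 <= l by lia. have : r.+2 * Q <= l * Q by rewrite leq_mul2r h orbT. rewrite !mulSn. lia. Qed.
Lemma arith2 B k j w : j < k -> w < B -> j*B + w < k*B.
Proof. move=> hj hw; apply: (@leq_trans (j.+1 * B)); first by rewrite mulSn addnC ltn_add2r.
by rewrite leq_mul2r hj orbT. Qed.

Lemma cpos_split k l m i j r y :
  cpos k l m i j r y = i * (k m * (l m * qq k l m)) +
     (j * (l m * qq k l m) + ((qq k l m - jidx k l m i) + r * qq k l m + y)).
Proof. by rewrite /cpos !addnA. Qed.

Lemma cocc_props S k l (W : forall m, lword S m -> bool) n :
  (forall i, 0 < k i) -> (forall i, 0 < l i) ->
  (forall m (ws : lword S m.+1), W m.+1 ws -> size ws = k m /\ all (W m) ws) ->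
  forall m (w : lword S m), n <= m -> W m w ->
  [/\ forall x, x \in cocc k l n w -> x.1 < qq k l m,
      uniq (map fst (cocc k l n w)) &
      forall mu, genetic_marker k n m mu -> count (fun x => x.2 == mu) (cocc k l n w)
         = \prod_(n <= p < m) (qq k l p * (l p - 1))].
Proof.
move=> hk hl hW; elim=> [|m IH] w nm hw.
  have n0 : n = 0 by lia.
  rewrite /= n0 /=; split => //.
    by move=> x; rewrite inE => /eqP ->.
  by move=> mu hm; rewrite (@marker_nil k 0 0 mu erefl hm) big_geq.
case: (eqVneq n m.+1) => [e|ne].
  rewrite /= e eqxx; split => //.
    by move=> x; rewrite inE => /eqP ->; apply: qq_gt0.
  by move=> mu hm; rewrite (@marker_nil k _ _ mu erefl hm) big_geq.
have nm' : n <= m by lia.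
have [hs ha] := hW m w hw.
have d : lword S m.
  simpl in w; destruct w as [|d0 w']; last exact d0.
  by exfalso; have := hk m; rewrite -hs.
have hWj : forall j, j < k m -> W m (nth d w j) by rewrite -hs; apply/all_nthP.
have hq := @qq_gt0 k l m hk hl.
rewrite (@cocc_eq S k l W n m w d hk hl hW ne hw).
set Q := qq k l m.
have hbnd : forall i j r y, i < Q -> j < k m -> r < l m - 1 -> y < Q ->
   (qq k l m - jidx k l m i) + r * qq k l m + y < l m * Q /\
   j * (l m * Q) + ((qq k l m - jidx k l m i) + r * qq k l m + y) < k m * (l m * Q).
  move=> i j r y hi hj hr hy; have h1 := @arith1 Q (l m) r y (jidx k l m i) hr hy.
  by split => //; apply: (@arith2 _ _ j _ hj).
split.
- move=> x /flatten_mapP[i hi /flatten_mapP[j hj /flatten_mapP[r hr /mapP[y hy ->]]]] /=.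
  move: hi hj hr; rewrite !mem_iota /= => hi hj hr.
  have [IH1 _ _] := IH _ nm' (hWj j hj).
  have [_ h2] := hbnd i j r y.1 hi hj hr (IH1 y hy).
  rewrite cpos_split qqS -/Q.
  have := @arith2 _ _ i _ hi h2; rewrite mulnC.
  have -> : Q * (k m * (l m * Q)) = k m * l m * Q ^ 2 by nia.
  by [].
- rewrite map_flatten -map_comp.
  apply: (@uniq_flatten_lab _ _ _ _ _ id (fun x => x %/ (k m * (l m * Q)))).
  + by rewrite map_id iota_uniq.
  + move=> i; rewrite mem_iota /= => hi /=; rewrite map_flatten -map_comp.
    apply: (@uniq_flatten_lab _ _ _ _ _ (fun j => i * k m + j) (fun x => x %/ (l m * Q))).
    * by rewrite map_inj_uniq ?iota_uniq //; apply: addnI.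
    * move=> j; rewrite mem_iota /= => hj /=; rewrite map_flatten -map_comp.
      apply: (@uniq_flatten_lab _ _ _ _ _ id
         (fun x => (x - (i * (k m * (l m * Q)) + j * (l m * Q) + (Q - jidx k l m i))) %/ Q)).
      - by rewrite map_id iota_uniq.
      - move=> r _ /=; rewrite -map_comp.
        have [_ IH2 _] := IH _ nm' (hWj j hj).
        rewrite (eq_map (g := addn (i * (k m * (l m * Q)) + j * (l m * Q) + (Q - jidx k l m i)
                      + r * Q) \o fst)) //.
        by rewrite map_comp map_inj_uniq //; apply: addnI.
      - move=> r x; rewrite mem_iota /= => hr /mapP[z /mapP[y hy ->] ->] /=.
        have [IH1 _ _] := IH _ nm' (hWj j hj).
        by rewrite /cpos -/Q -(addnA _ (r * Q)) addKn divn_lab // IH1.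
    * move=> j x; rewrite mem_iota /= => hj /mapP[z].
      move=> /flatten_mapP[r hr /mapP[y hy ->]] -> /=.
      move: hr; rewrite mem_iota /= => hr.
      have [IH1 _ _] := IH _ nm' (hWj j hj).
      have [h1 _] := hbnd i j r y.1 hi hj hr (IH1 y hy).
      rewrite cpos_split -/Q mulnA addnA -mulnDl divn_lab //.
  + move=> i x; rewrite mem_iota /= => hi /mapP[z].
    move=> /flatten_mapP[j hj /flatten_mapP[r hr /mapP[y hy ->]]] -> /=.
    move: hj hr; rewrite !mem_iota /= => hj hr.
    have [IH1 _ _] := IH _ nm' (hWj j hj).
    have [_ h2] := hbnd i j r y.1 hi hj hr (IH1 y hy).
    by rewrite cpos_split -/Q divn_lab.
- move=> mu hmu; have [mu' [jm emu]] := @marker_split k n m mu nm' hmu.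
  move: hmu; rewrite emu => /(@marker_rcons k n m mu' jm nm')[hmu' hjm].
  set c := \prod_(n <= p < m) (qq k l p * (l p - 1)).
  have hin : forall i j r, j < k m ->
     count (fun x => x.2 == rcons mu' jm)
       (map (fun x : nat * seq nat => (cpos k l m i j r x.1, rcons x.2 j)) (cocc k l n (nth d w j)))
     = (j == jm) * c.
    move=> i j r hj; rewrite count_map.
    have [_ _ IH3] := IH _ nm' (hWj j hj).
    rewrite (eq_count (a2 := fun x => (x.2 == mu') && (j == jm))); last first.
      by move=> x /=; rewrite eqseq_rcons.
    case: eqP => _; last by rewrite mul0n (eq_count (a2 := pred0)) ?count_pred0 // => x; rewrite andbF.
    by rewrite /= mul1n (eq_count (a2 := fun x => x.2 == mu')) ?IH3 // => x; rewrite andbT.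
  have hr : forall i j, j < k m ->
     count (fun x => x.2 == rcons mu' jm) (flatten [seq
       map (fun x : nat * seq nat => (cpos k l m i j r x.1, rcons x.2 j)) (cocc k l n (nth d w j))
       | r <- iota 0 (l m - 1)]) = (j == jm) * ((l m - 1) * c).
    move=> i j hj; rewrite count_flatten -map_comp (@sumn_const _ _ _ ((j == jm) * c)).
      by rewrite size_iota mulnCA.
    by apply/allP => r _ /=; rewrite hin.
  have hj : forall i,
     count (fun x => x.2 == rcons mu' jm) (flatten [seq flatten [seq
       map (fun x : nat * seq nat => (cpos k l m i j r x.1, rcons x.2 j)) (cocc k l n (nth d w j))
       | r <- iota 0 (l m - 1)] | j <- iota 0 (k m)]) = (l m - 1) * c.
    move=> i; rewrite count_flatten -map_comp.
    rewrite ((eq_in_map _ (fun j => (j == jm) * ((l m - 1) * c)) _).1).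
      by rewrite sumn_count_mul count_iota_eq // mul1n.
    by move=> j; rewrite mem_iota /= => hj; rewrite hr.
  rewrite count_flatten -map_comp (@sumn_const _ _ _ ((l m - 1) * c)).
    by rewrite size_iota big_nat_recr //= -/c -/Q; nia.
  by apply/allP => i _ /=; rewrite hj.
Qed.


Lemma size_undup_filter (L : seq (nat * seq nat)) (P : pred (nat * seq nat)) :
  uniq (map fst L) -> size (undup [seq x.1 | x <- L & P x]) = count P L.
Proof.
move=> h; rewrite undup_id ?size_map ?size_filter //.
exact: subseq_uniq (map_subseq _ (filter_subseq _ _)) h.
Qed.

Lemma K_split k n m : n <= m -> K k m = K k n * \prod_(n <= i < m) k i.
Proof.
move=> nm; rewrite /K -!(big_mkord xpredT).
by rewrite (big_cat_nat (leq0n n) nm).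
Qed.

Lemma q_split k l n m : n <= m ->
  qq k l m = qq k l n * \prod_(n <= p < m) (k p * l p * qq k l p).
Proof.
elim: m => [|m IH] nm.
  have n0 : n = 0 by lia.
  by rewrite n0 big_geq // muln1.
case: (eqVneq n m.+1) => [->|ne]; first by rewrite big_geq // muln1.
have nm' : n <= m by lia.
by rewrite big_nat_recr //= qqS IH // expnS expn1 !mulnA; lia.
Qed.

Local Open Scope ring_scope.

Theorem mainTheorem13 (Sigma : finType) (k l : nat -> nat)
    (W : forall m, lword Sigma m -> bool) (n m : nat) (w : lword Sigma m)
    (Sstar : seq (seq nat)) :
  circular_coeff k l ->
  odometer_construction k W ->
  (n <= m)%N -> W m w ->
  uniq Sstar -> all (genetic_marker k n m) Sstar ->
  let g := (\prod_(n <= i < m) k i)%N in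
  let d : rat := (size Sstar)%:R / g%:R in
  let A := undup [seq x.1 | x <- occ n w & x.2 \in Sstar] in
  let Ac := undup [seq x.1 | x <- cocc k l n w & x.2 \in Sstar] in
  let prodl : rat := \prod_(n <= p < m) (1 - ((l p)%:R)^-1) in
  (size A)%:R / (K k m)%:R = d / (K k n)%:R /\
  (size Ac)%:R / (qq k l m)%:R = d / (qq k l n)%:R * prodl /\
  (size Ac)%:R / (qq k l m)%:R
    = (size A)%:R / (K k m)%:R * prodl * (K k n)%:R / (qq k l n)%:R.
Proof.
move=> [hk2 [hl _]] [_ [hW _]] nm hw uS hS g d A Ac prodl.
have hk : forall i, (0 < k i)%N by move=> i; apply: leq_trans (hk2 i).
have [_ oU oC] := @occ_props Sigma k W n hk hW m w nm hw.
have [_ cU cC] := @cocc_props Sigma k l W n hk hl hW m w nm hw.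
have sA : size A = size Sstar.
  rewrite /A size_undup_filter // (@count_mem_uniq _ _ snd Sstar (occ n w) 1) ?muln1 //.
  by move=> s /(allP hS); apply: oC.
have sAc : size Ac = (size Sstar * \prod_(n <= p < m) (qq k l p * (l p - 1)))%N.
  rewrite /Ac size_undup_filter //.
  rewrite (@count_mem_uniq _ _ snd Sstar (cocc k l n w) (\prod_(n <= p < m) (qq k l p * (l p - 1)))) //.
  by move=> s /(allP hS); apply: cC.
set Gl := (\prod_(n <= p < m) l p)%N.
set Gq := (\prod_(n <= p < m) qq k l p)%N.
have h1 : (\prod_(n <= p < m) (k p * l p * qq k l p))%N = (g * Gl * Gq)%N by rewrite !big_split.
have h2 : (\prod_(n <= p < m) (qq k l p * (l p - 1)))%N = (Gq * \prod_(n <= p < m) (l p - 1))%N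
  by rewrite big_split.
have h3 : ((\prod_(n <= p < m) (l p - 1))%N%:R : rat) = Gl%:R * prodl.
  rewrite /prodl /Gl !natr_prod -big_split; apply: eq_bigr => p _ /=.
  by rewrite natrB ?hl // mulrBr mulr1 mulfV // pnatr_eq0 -lt0n hl.
have nz : forall x, (0 < x)%N -> (x%:R : rat) != 0 by move=> x hx; rewrite pnatr_eq0 -lt0n.
have gz : (g%:R : rat) != 0 by apply: nz; apply: prodn_gt0 => i; apply: hk.
have lz : (Gl%:R : rat) != 0 by apply: nz; apply: prodn_gt0 => i; apply: hl.
have qz : (Gq%:R : rat) != 0 by apply: nz; apply: prodn_gt0 => i; apply: qq_gt0.
have Kz := nz _ (@K_gt0 k n hk).
have qnz := nz _ (@qq_gt0 k l n hk hl).
have e1 : (size A)%:R / (K k m)%:R = d / (K k n)%:R.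
  rewrite sA (@K_split k n m nm) natrM /d; field; by rewrite Kz gz.
have e2 : (size Ac)%:R / (qq k l m)%:R = d / (qq k l n)%:R * prodl.
  rewrite sAc h2 (@q_split k l n m nm) h1 !natrM h3 /d; field.
  by rewrite qnz gz lz qz.
split => //; split => //.
rewrite e2 e1; field; by rewrite qnz Kz.
Qed.
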